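(* For all integers $n\ge2$ and $k\ge1$, the number $T_{n,k}$ of triangles (subgraphs isomorphic to $K_3$) of $H_{n,k}$ is $$T_{n,k}=\frac{1}{2}(n-2)\left(1-\frac{n}{3}-(n-1)^{k+1}+\frac{2}{3}n^k(2n-3)\right).$$
   Context: Let $n\ge 2$ and $k\ge 1$ be integers. $H_{n,k}$ is the simple undirected graph with vertex set $V_{n,k}=\mathbb{Z}_n^k$ (so $|V_{n,k}|=n^k$), whose vertices are written as strings $x_1x_2\ldots x_k$ with $x_j\in\mathbb{Z}_n=\{0,1,\ldots,n-1\}$. Two distinct vertices are adjacent if and only if they are related by one of the following rules. For $i=0$ the prefix $x_1\ldots x_i$ is empty, and ''$0\ldots0$'' denotes a string of zeros completing the word to length $k$. (R1) $x_1\ldots x_{k-1}x_k\sim x_1\ldots x_{k-1}y_k$ whenever $y_k\neq x_k$. (R2) For $0\le i\le k-2$: $x_1\ldots x_i0\ldots0\sim x_1\ldots x_ix_{i+1}\ldots x_k$ whenever $x_j\neq 0$ for all $i+1\le j\le k$. (R3) For $1\le i\le k-1$: $x_1\ldots x_{i-1}x_i0\ldots0\sim x_1\ldots x_{i-1}y_i0\ldots0$ whenever $x_i,y_i\neq0$ and $x_i\ne y_i$. In particular, $H_{n,1}$ is the complete graph $K_n$. *)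

(* Defs.v *)
From HB Require Import structures.
From mathcomp Require Import all_boot all_order all_algebra.
Set Implicit Arguments. Unset Strict Implicit. Unset Printing Implicit Defensive.

(* Vertices of H_{n,k}: words x_1 ... x_k over Z_n, encoded as finite
   functions 'I_k -> 'I_n; position j (1-based) of the paper is index j-1
   here.  Only the distinguished letter 0 matters, so 'I_n suffices. *)
Definition vert (n k : nat) := {ffun 'I_k -> 'I_n}.

Definition rule1 (n k : nat) (x y : vert n k) : bool :=
  [forall j : 'I_k, (j.+1 < k) ==> (x j == y j)] &&
  [exists j : 'I_k, (j.+1 == k) && (x j != y j)].

(* (R2), with 0-based prefix length i, 0 <= i <= k-2:
   x = x_1..x_i 0..0 and y = x_1..x_i y_{i+1}..y_k with all y_j <> 0, j > i. *)
Definition rule2 (n k : nat) (x y : vert n k) : bool :=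
  [exists i : 'I_k, (i.+2 <= k) &&
    [forall j : 'I_k,
      if j < i then x j == y j
      else (nat_of_ord (x j) == 0) && (nat_of_ord (y j) != 0)]].

(* (R3), with 1-based index i, 1 <= i <= k-1, i.e. 0-based p = i-1 <= k-2:
   x = x_1..x_{i-1} x_i 0..0 and y = x_1..x_{i-1} y_i 0..0,
   x_i, y_i nonzero and distinct. *)
Definition rule3 (n k : nat) (x y : vert n k) : bool :=
  [exists p : 'I_k, (p.+2 <= k) &&
    [&& nat_of_ord (x p) != 0, nat_of_ord (y p) != 0, x p != y p &
    [forall j : 'I_k,
      if j < p then x j == y j
      else (p < j) ==> (nat_of_ord (x j) == 0) && (nat_of_ord (y j) == 0)]]].

Definition Hadj (n k : nat) (x y : vert n k) : bool :=
  (x != y) &&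
  [|| rule1 x y, rule1 y x, rule2 x y, rule2 y x, rule3 x y | rule3 y x].

Definition triangles (n k : nat) : {set {set vert n k}} :=
  [set S : {set vert n k} | (#|S| == 3) &&
     [forall x in S, forall y in S, (x != y) ==> Hadj x y]].

Definition T_count (n k : nat) : nat := #|triangles n k|.

(* Main.v *)
Require Import Defs.
From HB Require Import structures.
From mathcomp Require Import all_boot all_order all_algebra.
From mathcomp Require Import ring zify.
Set Implicit Arguments. Unset Strict Implicit. Unset Printing Implicit Defensive.

Section Gen.
Variable T : finType.

Lemma sum_ind (A P : pred T) :
  \sum_(x in A) (P x : nat) = #|[pred x | (x \in A) && P x]|.
Proof.
rewrite -sum1_card [RHS](big_mkcond) /= [LHS]big_mkcond /=.
apply: eq_bigr => x _; rewrite ?inE /=; by case: (x \in A); case: (P x).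
Qed.

Lemma card_del1 (S : {set T}) x : x \in S ->
  #|[pred y | (y \in S) && (x != y)]| = #|S|.-1.
Proof.
move=> xS; rewrite (cardsD1 x S) xS /=.
apply: eq_card => y; rewrite !inE /=; case: (y \in S) => /=; last by rewrite andbF. by rewrite andbT eq_sym.
Qed.

Lemma card_del2 (S : {set T}) x y : x \in S -> y \in S -> x != y ->
  #|[pred z | (z \in S) && ((y != z) && (x != z))]| = #|S|.-2.
Proof.
move=> xS yS xy.
rewrite (cardsD1 x S) xS /= (cardsD1 y (S :\ x)) !inE eq_sym xy yS /=.
apply: eq_card => z; rewrite !inE (eq_sym z y) (eq_sym z x).
by case: (y == z); case: (x == z); case: (z \in S).
Qed.

Lemma distinct2 (S : {set T}) :
  \sum_(x in S) \sum_(y in S) (x != y : nat) = #|S| * (#|S|).-1.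
Proof.
rewrite -sum_nat_const; apply: eq_bigr => x xS.
by rewrite sum_ind card_del1.
Qed.

Lemma distinct3 (S : {set T}) :
  \sum_(x in S) \sum_(y in S) \sum_(z in S) ((x != y) && (y != z) && (x != z) : nat)
   = #|S| * (#|S|).-1 * (#|S|).-2.
Proof.
rewrite -mulnA -sum_nat_const; apply: eq_bigr => x xS.
transitivity (\sum_(y in S) (x != y : nat) * #|S|.-2).
  apply: eq_bigr => y yS; case xy: (x != y); last first.
    by rewrite mul0n big1 // => z _; rewrite /= andbF.
  rewrite mul1n -(@card_del2 S x y xS yS xy) -sum_ind; apply: eq_bigr => z _.
  by [].
by rewrite -big_distrl /= sum_ind card_del1.
Qed.

Definition tcount (A : rel T) :=
  \sum_x \sum_y \sum_z ((A x y && A y z && A x z) : nat).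

Definition tri (A : rel T) : {set {set T}} :=
  [set S : {set T} | (#|S| == 3) &&
     [forall x in S, forall y in S, (x != y) ==> A x y]].

Lemma card3 (x y z : T) : x != y -> y != z -> x != z -> #|[set x; y; z]| = 3.
Proof.
move=> xy yz xz.
have -> : [set x; y; z] = x |: (y |: [set z]) by apply/setP=> u; rewrite !inE orbA.
by rewrite !cardsU1 cards1 !inE negb_or xy xz yz.
Qed.

Lemma tri_pt (A : rel T) (Airr : irreflexive A) S x y z : S \in tri A ->
  (S == [set x; y; z]) && (A x y && A y z && A x z) =
  [&& x \in S, y \in S, z \in S, x != y, y != z & x != z].
Proof.
rewrite inE => /andP [/eqP cS /forallP FS].
have Ad : forall u v, A u v -> u != v.
  by move=> u v; apply: contraTneq => ->; rewrite Airr.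
apply/idP/idP.
  case/andP => /eqP -> /andP [/andP [Axy Ayz] Axz].
  by rewrite !inE !eqxx !orbT /= (Ad _ _ Axy) (Ad _ _ Ayz) (Ad _ _ Axz).
move=> /and3P [xS yS /and4P [zS xy yz xz]].
have HA : forall u v, u \in S -> v \in S -> u != v -> A u v.
  by move=> u v uS vS uv; move: (FS u); rewrite uS /= => /forallP /(_ v); rewrite vS uv.
rewrite (HA x y) // (HA y z) // (HA x z) // !andbT eq_sym eqEcard card3 // cS leqnn andbT.
by apply/subsetP => u; rewrite !inE => /orP [/orP [] | ] /eqP ->.
Qed.

Lemma tcount_tri (A : rel T) : irreflexive A -> symmetric A -> tcount A = 6 * #|tri A|.
Proof.
move=> Airr Asym.
have Ad : forall u v, A u v -> u != v.
  by move=> u v; apply: contraTneq => ->; rewrite Airr.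
have E : forall x y z, ((A x y && A y z && A x z) : nat) =
   \sum_(S in tri A) ((S == [set x; y; z]) && (A x y && A y z && A x z) : nat).
  move=> x y z; case B: (A x y && A y z && A x z); last first.
    by rewrite big1 // => S _; rewrite andbF.
  have Hin : [set x; y; z] \in tri A.
    move: B => /andP [/andP [Axy Ayz] Axz].
    rewrite inE card3 ?Ad // eqxx /=.
    apply/forallP => u; apply/implyP => uS; apply/forallP => v; apply/implyP => vS.
    apply/implyP => uv.
    move: uS vS uv; rewrite !inE => /orP [/orP [] | ] /eqP -> /orP [/orP [] | ] /eqP ->;
      rewrite ?eqxx // => _; by rewrite // Asym.
  rewrite (bigD1 _ Hin) /= eqxx big1 // => S /andP [_ /negbTE ->] //.
rewrite /tcount.
under eq_bigr do under eq_bigr do under eq_bigr do rewrite E.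
under eq_bigr do under eq_bigr do rewrite exchange_big.
under eq_bigr do rewrite exchange_big.
rewrite exchange_big /= mulnC -sum_nat_const.
apply: eq_bigr => S HS.
have -> : 6 = #|S| * (#|S|).-1 * (#|S|).-2.
  by move: HS; rewrite inE => /andP [/eqP -> _].
transitivity (\sum_x \sum_y \sum_z
   ([&& x \in S, y \in S, z \in S, x != y, y != z & x != z] : nat)).
  apply: eq_bigr => x _; apply: eq_bigr => y _; apply: eq_bigr => z _.
  by rewrite (@tri_pt A Airr S x y z HS).
rewrite -distinct3 [RHS]big_mkcond; apply: eq_bigr => x _.
case: (x \in S); last by rewrite big1 // => y _; rewrite big1.
rewrite [RHS]big_mkcond; apply: eq_bigr => y _.
case: (y \in S); last by rewrite big1 // => z _; rewrite andbF.
rewrite [RHS]big_mkcond; apply: eq_bigr => z _.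
by case: (z \in S); rewrite /= ?andbA.
Qed.
End Gen.


Definition consv n k (a : 'I_n) (u : vert n k) : vert n k.+1 :=
  [ffun j => if unlift ord0 j is Some j' then u j' else a].

Lemma consv0 n k a (u : vert n k) : consv a u ord0 = a.
Proof. by rewrite ffunE unlift_none. Qed.

Lemma consvS n k a (u : vert n k) j : consv a u (lift ord0 j) = u j.
Proof. by rewrite ffunE liftK. Qed.

Lemma forallS k (P : pred 'I_k.+1) :
  [forall j, P j] = P ord0 && [forall j : 'I_k, P (lift ord0 j)].
Proof.
apply/forallP/andP => [H | [H0 /forallP H] j]; first by split => //; apply/forallP.
by case: (unliftP ord0 j) => [j' -> | ->].
Qed.

Lemma existsS k (P : pred 'I_k.+1) :
  [exists j, P j] = P ord0 || [exists j : 'I_k, P (lift ord0 j)].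
Proof.
apply/existsP/orP => [[j] | [H0 | /existsP [j Hj]]].
- by case: (unliftP ord0 j) => [j' -> H | -> ->]; [right; apply/existsP; exists j' | left].
- by exists ord0.
- by exists (lift ord0 j).
Qed.

Lemma rule1S n k a b (u v : vert n k.+1) :
  rule1 (consv a u) (consv b v) = (a == b) && rule1 u v.
Proof.
rewrite /rule1 (forallS (k:=k.+1)) (existsS (k:=k.+1)) !consv0.
under eq_forallb do rewrite !consvS lift0 ltnS.
under eq_existsb do rewrite !consvS lift0 eqSS.
by rewrite /= andbA.
Qed.

Definition zw n k (u : vert n k) := [forall j, nat_of_ord (u j) == 0].
Definition nz n k (u : vert n k) := [forall j, nat_of_ord (u j) != 0].

Lemma bump0 m : bump 0 m = m.+1. Proof. by []. Qed.

Lemma rule2S n k a b (u v : vert n k.+1) :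
  rule2 (consv a u) (consv b v) =
  [&& nat_of_ord a == 0, nat_of_ord b != 0, zw u & nz v] || ((a == b) && rule2 u v).
Proof.
rewrite /rule2 (existsS (k:=k.+1)) (forallS (k:=k.+1)) /= !consv0.
under eq_forallb do rewrite !consvS /=.
under eq_existsb => i do rewrite (forallS (k:=k.+1)) /= !consv0 !bump0 ltnS /=.
under eq_existsb => i do under eq_forallb => j do rewrite !consvS /= !bump0 ltnS.
rewrite -!andbA; congr (_ || _).
  congr (_ && (_ && _)); apply/forallP/andP => [H | [/forallP H1 /forallP H2] x].
    by split; apply/forallP => x; case/andP: (H x).
  by rewrite H1 H2.
case: (a == b) => //=.
by apply/existsP => [][x]; rewrite andbF.
Qed.

Lemma rule3S n k a b (u v : vert n k.+1) :
  rule3 (consv a u) (consv b v) =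
  [&& nat_of_ord a != 0, nat_of_ord b != 0, a != b, zw u & zw v] || ((a == b) && rule3 u v).
Proof.
rewrite /rule3 (existsS (k:=k.+1)) (forallS (k:=k.+1)) /= !consv0.
under eq_forallb do rewrite !consvS /=.
under eq_existsb => i do rewrite (forallS (k:=k.+1)) /= !consv0 !consvS /= !bump0 ltnS /=.
under eq_existsb => i do under eq_forallb => j do rewrite !consvS /= !bump0 !ltnS.
congr (_ || _).
  congr (_ && (_ && (_ && _))); apply/forallP/andP => [H | [/forallP H1 /forallP H2] x].
    by split; apply/forallP => x; case/andP: (H x).
  by rewrite H1 H2.
case: (a == b) => //=.
by apply/existsP => [][x]; rewrite !andbF.
Qed.

Lemma consv_eq n k a b (u v : vert n k) :
  (consv a u == consv b v) = (a == b) && (u == v).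
Proof.
apply/eqP/andP => [E | [/eqP -> /eqP ->] //].
split; first by rewrite -(consv0 a u) -(consv0 b v) E.
apply/eqP/ffunP => j; by rewrite -(consvS a u) -(consvS b v) E.
Qed.

Definition Cr n k (a b : 'I_n) (u v : vert n k) :=
  [|| [&& nat_of_ord a == 0, nat_of_ord b != 0, zw u & nz v],
      [&& nat_of_ord b == 0, nat_of_ord a != 0, zw v & nz u]
    | [&& nat_of_ord a != 0, nat_of_ord b != 0, zw u & zw v]].

Lemma HadjS n k a b (u v : vert n k.+1) :
  Hadj (consv a u) (consv b v) = if a == b then Hadj u v else Cr a b u v.
Proof.
rewrite /Hadj !rule1S !rule2S !rule3S consv_eq.
case: (eqVneq a b) => [<- | ab].
  rewrite /=.
  by case: (nat_of_ord a == 0); rewrite /= ?orbF.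
rewrite /= !orbF /Cr.
by case: (nat_of_ord a == 0); case: (nat_of_ord b == 0); case: (zw u); case: (zw v);
  case: (nz u); case: (nz v); rewrite //= ?andbF ?orbF.
Qed.

Lemma zwS n k a (u : vert n k) : zw (consv a u) = (nat_of_ord a == 0) && zw u.
Proof. rewrite /zw forallS consv0; congr (_ && _); apply/forallP/forallP => H j; move: (H j); by rewrite consvS. Qed.

Lemma nzS n k a (u : vert n k) : nz (consv a u) = (nat_of_ord a != 0) && nz u.
Proof. rewrite /nz forallS consv0; congr (_ && _); apply/forallP/forallP => H j; move: (H j); by rewrite consvS. Qed.

Lemma zw_nz n k (u : vert n k.+1) : zw u -> nz u = false.
Proof. by move=> /forallP /(_ ord0) H; apply/negbTE/negP => /forallP /(_ ord0); rewrite H. Qed.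

Lemma zw_uniq n k (u v : vert n k) : zw u -> zw v -> u = v.
Proof.
move=> /forallP Hu /forallP Hv; apply/ffunP => j; apply: ord_inj.
by rewrite (eqP (Hu j)) (eqP (Hv j)).
Qed.

Lemma Hadj_irr n k : irreflexive (@Hadj n k).
Proof. by move=> x; rewrite /Hadj eqxx. Qed.

Lemma Hadj_sym n k : symmetric (@Hadj n k).
Proof.
move=> x y; rewrite /Hadj eq_sym; congr (_ && _).
by case: (rule1 x y); case: (rule1 y x); case: (rule2 x y); case: (rule2 y x);
  case: (rule3 x y); case: (rule3 y x).
Qed.

Lemma sum_consv n k (F : vert n k.+1 -> nat) :
  \sum_x F x = \sum_a \sum_u F (consv a u).
Proof.
rewrite pair_big /=.
rewrite (reindex (fun p : 'I_n * vert n k => consv p.1 p.2)) //=.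
exists (fun x : vert n k.+1 => (x ord0, [ffun j => x (lift ord0 j)])).
  by move=> [a u] _ /=; rewrite consv0; congr pair; apply/ffunP => j; rewrite ffunE consvS.
move=> x _; apply/ffunP => j; rewrite ffunE.
by case: (unliftP ord0 j) => [j' -> | ->]; rewrite ?liftK ?unlift_none // ffunE.
Qed.

Lemma ne0 n (a c : 'I_n) : a != c ->
  ~~ ((nat_of_ord a == 0) && (nat_of_ord c == 0)).
Proof.
apply: contra => /andP [/eqP h1 /eqP h2]; apply/eqP/ord_inj; by rewrite h1 h2.
Qed.

Lemma CrC n k a b (u v : vert n k) : Cr a b u v = Cr b a v u.
Proof.
rewrite /Cr; by case: (nat_of_ord a == 0); case: (nat_of_ord b == 0);
  case: (zw u); case: (zw v); case: (nz u); case: (nz v).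
Qed.

Lemma coreL n k (a c : 'I_n) (u v w : vert n k.+1) : a != c ->
  Cr a c u w && Cr a c v w && Hadj u v =
  [&& nat_of_ord c == 0, zw w, nat_of_ord a != 0, nz u, nz v & Hadj u v].
Proof.
move=> /ne0 Hac; rewrite /Cr.
case Zu: (zw u); case Zv: (zw v); case Zw: (zw w);
  rewrite ?(zw_nz Zu) ?(zw_nz Zv) ?(zw_nz Zw);
  try (rewrite (zw_uniq Zu Zv) Hadj_irr ?andbF //);
  move: Hac; case: (nat_of_ord a == 0); case: (nat_of_ord c == 0);
  case: (nz u); case: (nz v); case: (nz w); rewrite //= ?andbF.
Qed.

Lemma coreL3 n k (a b c : 'I_n) (u v w : vert n k.+1) : a != b -> b != c -> a != c ->
  Cr a b u v && Cr b c v w && Cr a c u w =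
  [&& nat_of_ord a != 0, nat_of_ord b != 0, nat_of_ord c != 0, zw u, zw v & zw w].
Proof.
move=> /ne0 Hab /ne0 Hbc /ne0 Hac; rewrite /Cr.
case Zu: (zw u); case Zv: (zw v); case Zw: (zw w);
  rewrite ?(zw_nz Zu) ?(zw_nz Zv) ?(zw_nz Zw);
  move: Hab Hbc Hac; case: (nat_of_ord a == 0); case: (nat_of_ord b == 0);
  case: (nat_of_ord c == 0);
  case: (nz u); case: (nz v); case: (nz w); rewrite //= ?andbF.
Qed.

Lemma sum_zw n k (P : bool) : 0 < n -> \sum_(w : vert n k) ((zw w && P) : nat) = P.
Proof.
move=> n0; case: P; last by rewrite big1 // => w _; rewrite andbF.
pose z0 : vert n k := [ffun _ => Ordinal n0].
rewrite (bigD1 z0) /=; last by [].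
have Z0 : zw z0 by apply/forallP => j; rewrite ffunE.
rewrite andbT Z0 big1 // => w wz; rewrite andbT.
case Zw: (zw w) => //; move: wz; by rewrite (zw_uniq Zw Z0) eqxx.
Qed.

Definition tV n k := tcount (@Hadj n k).
Definition eV n k := \sum_(u : vert n k) \sum_(v : vert n k) ([&& nz u, nz v & Hadj u v] : nat).

Lemma sumP1 (T1 : finType) (P : bool) (X : T1 -> bool) :
  \sum_u ((P && X u) : nat) = P * \sum_u (X u : nat).
Proof. by case: P; rewrite ?mul1n ?mul0n // big1. Qed.

Lemma sumP2 (T1 T2 : finType) (P : bool) (X : T1 -> T2 -> bool) :
  \sum_u \sum_v ((P && X u v) : nat) = P * \sum_u \sum_v (X u v : nat).
Proof. by case: P; rewrite ?mul1n ?mul0n // big1 // => u _; rewrite big1. Qed.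

Lemma Gval n k (a b c : 'I_n) : 0 < n ->
  \sum_(u : vert n k.+1) \sum_(v : vert n k.+1) \sum_(w : vert n k.+1)
     ((Hadj (consv a u) (consv b v) && Hadj (consv b v) (consv c w)
        && Hadj (consv a u) (consv c w)) : nat)
  = ((a == b) && (b == c)) * tV n k.+1
    + ((a == b) && (nat_of_ord c == 0) && (nat_of_ord a != 0)) * eV n k.+1
    + ((a == c) && (nat_of_ord b == 0) && (nat_of_ord a != 0)) * eV n k.+1
    + ((b == c) && (nat_of_ord a == 0) && (nat_of_ord b != 0)) * eV n k.+1
    + [&& a != b, b != c, a != c, nat_of_ord a != 0, nat_of_ord b != 0
        & nat_of_ord c != 0].
Proof.
move=> n0.
under eq_bigr do under eq_bigr do under eq_bigr do rewrite !HadjS.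
case: (eqVneq a b) => [<- | ab]; case: (eqVneq a c) => [<- | ac].
- rewrite /tV /tcount /=.
  by case: (nat_of_ord a == 0); rewrite /= ?mul0n ?addn0 ?mul1n.
- rewrite /=.
  have E : forall u v w : vert n k.+1, Hadj u v && Cr a c v w && Cr a c u w =
     zw w && [&& nat_of_ord c == 0, nat_of_ord a != 0, nz u, nz v & Hadj u v].
    move=> u v w; transitivity (Cr a c u w && Cr a c v w && Hadj u v); first by case: (Hadj u v); case: (Cr a c v w); case: (Cr a c u w).
    rewrite coreL //.
    by case: (zw w); case: (nat_of_ord c == 0).
  under eq_bigr do under eq_bigr do under eq_bigr do rewrite E.
  under eq_bigr do under eq_bigr do rewrite sum_zw //.
  under eq_bigr do under eq_bigr do rewrite andbA.
  rewrite sumP2 /eV /=.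
  by rewrite !mul0n add0n !addn0.
- rewrite (eq_sym b a) (negbTE ab) /=.
  have E : forall u v w : vert n k.+1, Cr a b u v && Cr b a v w && Hadj u w =
     zw v && [&& nat_of_ord b == 0, nat_of_ord a != 0, nz u, nz w & Hadj u w].
    move=> u v w; rewrite (CrC b) coreL //.
    by case: (zw v); case: (nat_of_ord b == 0).
  under eq_bigr do under eq_bigr do under eq_bigr do rewrite E.
  under eq_bigr do rewrite exchange_big.
  under eq_bigr do under eq_bigr do rewrite sum_zw //.
  under eq_bigr do under eq_bigr do rewrite andbA.
  rewrite sumP2 /eV /=.
  by rewrite !mul0n !add0n !addn0.
- case: (eqVneq b c) => [<- | bc].
    rewrite /=.
    have E : forall u v w : vert n k.+1, Cr a b u v && Hadj v w && Cr a b u w =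
       zw u && [&& nat_of_ord a == 0, nat_of_ord b != 0, nz v, nz w & Hadj v w].
      move=> u v w; rewrite (CrC a b u v) (CrC a b u w).
      transitivity (Cr b a v u && Cr b a w u && Hadj v w);
        first by case: (Hadj v w); case: (Cr b a v u); case: (Cr b a w u).
      rewrite coreL ?(eq_sym b a) //.
      by case: (zw u); case: (nat_of_ord a == 0).
    under eq_bigr do under eq_bigr do under eq_bigr do rewrite E.
    under eq_bigr do rewrite sumP2.
    have Z1 : \sum_(u : vert n k.+1) (zw u : nat) = 1.
      transitivity (\sum_(u : vert n k.+1) ((zw u && true) : nat)); first by apply: eq_bigr => u _; rewrite andbT.
      by rewrite sum_zw.
    rewrite -big_distrl /= Z1 mul1n.
    under eq_bigr do under eq_bigr do rewrite andbA.
    rewrite sumP2 /eV /=.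
    by rewrite !mul0n !add0n !addn0.
  rewrite /=.
  have E : forall u v w : vert n k.+1, Cr a b u v && Cr b c v w && Cr a c u w =
     [&& nat_of_ord a != 0, nat_of_ord b != 0 & nat_of_ord c != 0] &&
       (zw w && (zw v && zw u)).
    move=> u v w; rewrite coreL3 //.
    by case: (zw u); case: (zw v); case: (zw w); rewrite ?andbF ?andbT.
  under eq_bigr do under eq_bigr do under eq_bigr do rewrite E.
  rewrite !mul0n !add0n.
  case: ([&& nat_of_ord a != 0, nat_of_ord b != 0 & nat_of_ord c != 0]) => /=;
    last by rewrite big1 // => u _; rewrite big1 // => v _; rewrite big1.
  under eq_bigr do under eq_bigr do rewrite sum_zw //.
  under eq_bigr do rewrite sum_zw //.
  transitivity (\sum_(u : vert n k.+1) ((zw u && true) : nat));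
    first by apply: eq_bigr => u _; rewrite andbT.
  by rewrite sum_zw.
Qed.

Section Letters.
Variable n : nat.
Hypothesis n0 : 0 < n.
Let o : 'I_n := Ordinal n0.

Lemma is0 (a : 'I_n) : (nat_of_ord a == 0) = (a == o).
Proof. by []. Qed.

Lemma sum_eq (b : 'I_n) : \sum_c ((b == c) : nat) = 1.
Proof.
rewrite (bigD1 b) //= eqxx big1 // => c; by rewrite eq_sym => /negbTE ->.
Qed.

Lemma sum_z : \sum_(a : 'I_n) ((nat_of_ord a == 0) : nat) = 1.
Proof. by under eq_bigr do rewrite is0 eq_sym; rewrite sum_eq. Qed.

Definition Snz := [set a : 'I_n | nat_of_ord a != 0].

Lemma card_Snz : #|Snz| = n.-1.
Proof.
rewrite (_ : Snz = [set~ o]) ?cardsC1 ?card_ord //.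
by apply/setP => a; rewrite !inE is0.
Qed.

Lemma sum_nz : \sum_(a : 'I_n) ((nat_of_ord a != 0) : nat) = n.-1.
Proof.
by rewrite -card_Snz -sum1_card [RHS]big_mkcond; apply: eq_bigr => a _; rewrite inE; case: (_ != _).
Qed.

Lemma T1 : \sum_(a : 'I_n) \sum_(b : 'I_n) \sum_(c : 'I_n) (((a == b) && (b == c)) : nat) = n.
Proof.
under eq_bigr do under eq_bigr do rewrite sumP1 sum_eq muln1.
under eq_bigr do rewrite sum_eq.
by rewrite sum_nat_const card_ord muln1.
Qed.

Lemma T2 : \sum_(a : 'I_n) \sum_(b : 'I_n) \sum_(c : 'I_n)
  (((a == b) && (nat_of_ord c == 0) && (nat_of_ord a != 0)) : nat) = n.-1.
Proof.
under eq_bigr do under eq_bigr do under eq_bigr do rewrite andbAC.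
under eq_bigr do under eq_bigr do rewrite sumP1 sum_z muln1 andbC.
under eq_bigr do rewrite sumP1 sum_eq muln1.
by rewrite sum_nz.
Qed.

Lemma T3 : \sum_(a : 'I_n) \sum_(b : 'I_n) \sum_(c : 'I_n)
  (((a == c) && (nat_of_ord b == 0) && (nat_of_ord a != 0)) : nat) = n.-1.
Proof.
under eq_bigr do under eq_bigr do under eq_bigr do rewrite -andbA andbC.
under eq_bigr do under eq_bigr do rewrite sumP1 sum_eq muln1 andbC.
under eq_bigr do rewrite sumP1 sum_z muln1.
by rewrite sum_nz.
Qed.

Lemma T4 : \sum_(a : 'I_n) \sum_(b : 'I_n) \sum_(c : 'I_n)
  (((b == c) && (nat_of_ord a == 0) && (nat_of_ord b != 0)) : nat) = n.-1.
Proof.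
under eq_bigr do under eq_bigr do under eq_bigr do rewrite -andbA andbC.
under eq_bigr do under eq_bigr do rewrite sumP1 sum_eq muln1.
under eq_bigr do rewrite sumP1 sum_nz.
by rewrite -big_distrl /= sum_z mul1n.
Qed.

Lemma T5 : \sum_(a : 'I_n) \sum_(b : 'I_n) \sum_(c : 'I_n)
  ([&& a != b, b != c, a != c, nat_of_ord a != 0, nat_of_ord b != 0
        & nat_of_ord c != 0] : nat) = n.-1 * n.-1.-1 * n.-1.-2.
Proof.
rewrite -card_Snz -distinct3 [RHS]big_mkcond; apply: eq_bigr => a _.
rewrite inE; case: (nat_of_ord a != 0); last by rewrite big1 // => b _; rewrite big1 // => c _; rewrite !andbF.
rewrite [RHS]big_mkcond; apply: eq_bigr => b _.
rewrite inE; case: (nat_of_ord b != 0); last by rewrite big1 // => c _; rewrite !andbF.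
rewrite [RHS]big_mkcond; apply: eq_bigr => c _.
rewrite inE; case: (nat_of_ord c != 0); rewrite /= ?andbT ?andbF //.
by rewrite andbA.
Qed.
End Letters.

Lemma sum3_distr (I : finType) (F : I -> I -> I -> nat) e :
  \sum_a \sum_b \sum_c (F a b c * e) = (\sum_a \sum_b \sum_c F a b c) * e.
Proof.
rewrite big_distrl; apply: eq_bigr => a _; rewrite big_distrl; apply: eq_bigr => b _.
by rewrite big_distrl.
Qed.

Lemma sum2_distr (I : finType) (F : I -> I -> nat) e :
  \sum_a \sum_b (F a b * e) = (\sum_a \sum_b F a b) * e.
Proof.
rewrite big_distrl; apply: eq_bigr => a _; by rewrite big_distrl.
Qed.

Lemma tV_rec n k : 0 < n ->
  tV n k.+2 = n * tV n k.+1 + 3 * (n.-1 * eV n k.+1) + n.-1 * n.-1.-1 * n.-1.-2.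
Proof.
move=> n0.
rewrite {1}/tV {1}/tcount sum_consv.
under eq_bigr => a _ do under eq_bigr => u _ do rewrite sum_consv.
under eq_bigr => a _ do under eq_bigr => u _ do under eq_bigr => b _ do
  under eq_bigr => v _ do rewrite sum_consv.
under eq_bigr => a _ do rewrite exchange_big.
under eq_bigr => a _ do under eq_bigr => b _ do under eq_bigr => u _ do rewrite exchange_big.
under eq_bigr => a _ do under eq_bigr => b _ do rewrite exchange_big.
under eq_bigr => a _ do under eq_bigr => b _ do under eq_bigr => c _ do rewrite Gval //.
under eq_bigr do under eq_bigr do rewrite !big_split /=.
under eq_bigr do rewrite !big_split /=.
rewrite !big_split /=.
rewrite !sum3_distr T1 // T2 // T3 // T4 // T5 //.
ring.
Qed.

Lemma eV_pt n k (a b : 'I_n) (u v : vert n k.+1) :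
  [&& (nat_of_ord a != 0) && nz u, (nat_of_ord b != 0) && nz v
    & (if a == b then Hadj u v else Cr a b u v)] =
  ((a == b) && (nat_of_ord a != 0)) && [&& nz u, nz v & Hadj u v].
Proof.
case: (eqVneq a b) => [<- | ab] /=.
  by case: (nat_of_ord a != 0); case: (nz u); case: (nz v).
case Nu: (nz u); case Nv: (nz v); rewrite ?andbF //=.
have Zu : zw u = false by apply/negP => Zu; rewrite (zw_nz Zu) in Nu.
have Zv : zw v = false by apply/negP => Zv; rewrite (zw_nz Zv) in Nv.
by rewrite /Cr Zu Zv !andbF.
Qed.

Lemma eV_rec n k : 0 < n -> eV n k.+2 = n.-1 * eV n k.+1.
Proof.
move=> n0.
rewrite {1}/eV sum_consv.
under eq_bigr => a _ do under eq_bigr => u _ do rewrite sum_consv.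
under eq_bigr => a _ do rewrite exchange_big.
under eq_bigr => a _ do under eq_bigr => b _ do under eq_bigr => u _ do
  under eq_bigr => v _ do rewrite !nzS HadjS eV_pt.
under eq_bigr => a _ do under eq_bigr => b _ do rewrite sumP2.
rewrite -/(eV n k.+1).
rewrite sum2_distr; congr (_ * _).
under eq_bigr => a _ do under eq_bigr => b _ do rewrite andbC.
under eq_bigr => a _ do rewrite sumP1 sum_eq muln1.
by rewrite sum_nz.
Qed.

Lemma Hadj1 n (x y : vert n 1) : Hadj x y = (x ord0 != y ord0).
Proof.
have E : (x == y) = (x ord0 == y ord0).
  by apply/eqP/eqP => [-> // | H]; apply/ffunP => j; rewrite (ord1 j).
have r2 : forall x y : vert n 1, rule2 x y = false.
  by move=> x' y'; apply/existsP => [][i]; rewrite (ord1 i).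
have r3 : forall x y : vert n 1, rule3 x y = false.
  by move=> x' y'; apply/existsP => [][i]; rewrite (ord1 i).
have r1 : forall x y : vert n 1, rule1 x y = (x ord0 != y ord0).
  move=> x' y'; apply/andP/idP => [[_ /existsP [j]] | H].
    by rewrite (ord1 j).
  split; first by apply/forallP => j; rewrite (ord1 j).
  by apply/existsP; exists ord0; rewrite H.
rewrite /Hadj !r2 !r3 !r1 E eq_sym.
by case: (y ord0 == x ord0).
Qed.

Lemma sum_v0 n (c : nat) : \sum_(u : vert n 0) c = c.
Proof. by rewrite sum_nat_const card_ffun !card_ord expn0 mul1n. Qed.

Lemma nz0 n (u : vert n 0) : nz u.
Proof. by apply/forallP => [][]. Qed.

Lemma tV1 n : tV n 1 = n * n.-1 * n.-2.
Proof.
rewrite /tV /tcount.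
under eq_bigr do under eq_bigr do under eq_bigr do rewrite !Hadj1.
rewrite sum_consv.
under eq_bigr => a _ do under eq_bigr => u _ do rewrite sum_consv.
under eq_bigr => a _ do under eq_bigr => u _ do under eq_bigr => b _ do
  under eq_bigr => v _ do rewrite sum_consv.
under eq_bigr => a _ do under eq_bigr => u _ do under eq_bigr => b _ do
  under eq_bigr => v _ do under eq_bigr => c _ do under eq_bigr => w _ do rewrite !consv0.
under eq_bigr => a _ do under eq_bigr => u _ do under eq_bigr => b _ do
  under eq_bigr => v _ do under eq_bigr => c _ do rewrite sum_v0.
under eq_bigr => a _ do under eq_bigr => u _ do under eq_bigr => b _ do rewrite sum_v0.
under eq_bigr => a _ do rewrite sum_v0.
have := distinct3 [set: 'I_n]; rewrite cardsT card_ord => <-.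
rewrite [RHS]big_mkcond; apply: eq_bigr => a _; rewrite inE.
rewrite [RHS]big_mkcond; apply: eq_bigr => b _; rewrite inE.
rewrite [RHS]big_mkcond; apply: eq_bigr => c _; rewrite inE.
by [].
Qed.

Lemma eV1 n : 0 < n -> eV n 1 = n.-1 * n.-2.
Proof.
move=> n0; rewrite /eV.
rewrite sum_consv.
under eq_bigr => a _ do under eq_bigr => u _ do rewrite sum_consv.
under eq_bigr => a _ do under eq_bigr => u _ do under eq_bigr => b _ do
  under eq_bigr => v _ do rewrite !nzS !nz0 Hadj1 !consv0 !andbT.
under eq_bigr => a _ do under eq_bigr => u _ do under eq_bigr => b _ do rewrite sum_v0.
under eq_bigr => a _ do rewrite sum_v0.
have := distinct2 (Snz n); rewrite (card_Snz n0) => <-.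
rewrite [RHS]big_mkcond; apply: eq_bigr => a _; rewrite inE.
case: (nat_of_ord a != 0); last by rewrite big1.
rewrite [RHS]big_mkcond; apply: eq_bigr => b _; rewrite inE.
by case: (nat_of_ord b != 0).
Qed.

Lemma eV_closed n j : 0 < n -> eV n j.+1 = n.-1 ^ j.+1 * n.-2.
Proof.
move=> n0; elim: j => [|j IH]; first by rewrite eV1 // expn1.
by rewrite eV_rec // IH [in RHS]expnS mulnA.
Qed.

Import GRing.Theory Num.Theory.
Local Open Scope ring_scope.

Lemma tV_closed m j : ((tV m.+2 j.+1)%:R : rat) =
  m%:R * (3 - (m%:R + 2) - 3 * (m%:R + 1) ^+ j.+2 + 2 * (m%:R + 2) ^+ j.+1 * (2 * (m%:R + 2) - 3)).
Proof.
have Hm : ((m * m.-1)%N%:R : rat) = m%:R * (m%:R - 1).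
  by case: m => [|m]; rewrite ?mul0r ?mul0n // natrM /= -addn1 natrD addrK.
elim: j => [|j IH].
  rewrite tV1 /= !natrM -(addn2 m) -(addn1 m) !natrD.
  ring.
rewrite tV_rec // eV_closed //.
rewrite (_ : m.+2.-1 = m.+1) // (_ : m.+2.-2 = m) //.
rewrite natrD natrD -mulnA [X in _ + X]natrM Hm !natrM IH natrX.
rewrite -(addn2 m) -(addn1 m) !natrD.
rewrite !exprS.
ring.
Qed.

Theorem mainTheorem11 (n k : nat) (hn : (2 <= n)%N) (hk : (1 <= k)%N) :
  (T_count n k)%:R =
    (1 / 2 : rat) * ((n%:R - 2) *
      (1 - n%:R / 3 - (n%:R - 1) ^+ k.+1 + (2 / 3) * n%:R ^+ k * (2 * n%:R - 3))).
Proof.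
case: n hn => [|[|m]] // _; case: k hk => [|j] // _.
have H6 : (6 * T_count m.+2 j.+1)%N = tV m.+2 j.+1.
  by rewrite /T_count /tV (tcount_tri (@Hadj_irr _ _) (@Hadj_sym _ _)).
have := tV_closed m j; rewrite -H6 natrM => E.
have -> : ((T_count m.+2 j.+1)%:R : rat) = (6%:R * (T_count m.+2 j.+1)%:R) / 6%:R.
  by field.
rewrite E -(addn2 m) natrD.
have -> : (m%:R + 2 - 1 : rat) = m%:R + 1 by ring.
set P := (m%:R + 1) ^+ j.+2; set Q := (m%:R + 2) ^+ j.+1.
by field.
Qed.
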